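(* Let $\Gamma$ be a non-abelian $2$-generated finite $p$-group ($p$ odd) with cyclic derived subgroup and $\mathrm{inv}(\Gamma)=(p,m,n_1,n_2,o_1,o_2,o'_1,o'_2,u_1,u_2)$, satisfying $o_1\ne o_2$, $0<\max(o'_1,o'_2)<m$ and $n_2\ge2$. Then the natural projection $$\Delta_\Gamma:\frac{\mathcal I(\Gamma')k\Gamma}{\mathcal I(\Gamma')\mathcal I(\Gamma)}\to\frac{\mathcal I(\Gamma')k\Gamma+\mathcal I(\Gamma)^3}{\mathcal I(\Gamma)^3},\quad x+\mathcal I(\Gamma')\mathcal I(\Gamma)\mapsto x+\mathcal I(\Gamma)^3,$$ is a well-defined isomorphism of $k$-vector spaces (both spaces being one-dimensional).
   Context: $k=\mathbb F_p$, $\mathcal I(X)$ is the augmentation ideal of $kX$, $\Gamma'$ the derived subgroup. For a list $I=(p,m,n_1,n_2,o_1,o_2,o'_1,o'_2,u_1,u_2)$ of non-negative integers let $\mathcal G_I=\langle b_1,b_2 \mid a=[b_2,b_1],\ a^{p^m}=1,\ a^{b_i}=a^{r_i},\ b_i^{p^{n_i}}=a^{u_ip^{m-o'_i}}\ (i=1,2)\rangle$, where $[g,h]=g^{-1}h^{-1}gh$, $a^{b}=b^{-1}ab$, $r_1=1+p^{m-o_1}$, and $r_2=1+p^{m-o_2}$ if $o_2>o_1$, $r_2=r_1^{p^{o_1-o_2}}$ otherwise. By a known classification, for every non-abelian $2$-generated finite $p$-group $\Gamma$ with cyclic derived subgroup there is a unique such list $I$ satisfying conditions (I)–(VI) below with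 $\Gamma\cong\mathcal G_I$; it is denoted $\mathrm{inv}(\Gamma)$. (I) $n_1\ge n_2\ge1$. (II) $0\le o_i<\min(m,n_i)$, $0\le o'_i\le m-o_i$ and $p\nmid u_i$ for $i=1,2$. (III) One of: (a) $o_1=0$ and $o'_1\le o'_2\le o'_1+o_2+n_1-n_2$; (b) $o_2=0<o_1$, $n_2<n_1$ and $o'_1+\min(0,n_1-n_2-o_1)\le o'_2\le o'_1+n_1-n_2$; (c) $0<o_2<o_1<o_2+n_1-n_2$ and $o'_1\le o'_2\le o'_1+n_1-n_2$. (IV) $o_2+o'_1\le m\le n_1$ and one of: (a) $o_1+o'_2\le m\le n_2$; (b) $2m-o_1-o'_2=n_2<m$ and $u_2\equiv1 \pmod{p^{m-n_2}}$. (V) $1\le u_1\le p^{a_1}$, where $a_1=\min(o'_1,\ o_2+\min(n_1-n_2+o'_1-o'_2,0))$. (VI) One of: (a) $1\le u_2\le p^{a_2}$; (b) $o_1o_2\ne0$, $n_1-n_2+o'_1-o'_2=0<a_1$, $1+p^{a_2}\le u_2\le 2p^{a_2}$ and $u_1\equiv1\pmod p$; where $a_2=0$ if $o_1=0$; $a_2=\min(o_1,\,o'_2,\,o'_2-o'_1+\max(0,o_1+n_2-n_1))$ if $o_2=0<o_1$; and $a_2=\min(o_1-o_2,\,o'_2-o'_1)$ otherwise. *)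

(* Defs.v *)
From HB Require Import structures.
From mathcomp Require Import all_boot all_order all_algebra all_fingroup all_solvable.
Set Implicit Arguments. Unset Strict Implicit. Unset Printing Implicit Defensive.
Import GRing.Theory Num.Theory.

Section GroupAlgebra.
Local Open Scope ring_scope.
Variables (F : fieldType) (gT : finGroupType).

Definition galg := {ffun gT -> F^o}.

Definition gel (g : gT) : galg := [ffun h => ((h == g)%:R : F)].

Definition gmul (x y : galg) : galg :=
  [ffun g => \sum_(h : gT) (x h : F) * (y ((h^-1 * g)%g) : F)].

(* augmentation ideal of F[H] (H a subgroup), seen inside F[gT]:
   spanned by the elements h - 1, h in H *)
Definition aug (H : {set gT}) : {vspace galg} :=
  span [seq gel h - gel 1%g | h <- enum H].

Definition gprodv (U V : {vspace galg}) : {vspace galg} :=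
  span [seq gmul u v | u <- vbasis U, v <- vbasis V].

End GroupAlgebra.

Section Invariants.
Local Open Scope nat_scope.

Definition r1 (p m o1 : nat) := 1 + p ^ (m - o1).
Definition r2 (p m o1 o2 : nat) :=
  if o2 > o1 then 1 + p ^ (m - o2) else (r1 p m o1) ^ (p ^ (o1 - o2)).

Definition isog_GI (gT : finGroupType) (G : {set gT})
  (p m n1 n2 o1 o2 o1' o2' u1 u2 : nat) : Prop :=
  (G \isog Grp (b1 : b2 :
     ([~ b2, b1] ^+ (p ^ m) = 1,
      [~ b2, b1] ^ b1 = [~ b2, b1] ^+ (r1 p m o1),
      [~ b2, b1] ^ b2 = [~ b2, b1] ^+ (r2 p m o1 o2),
      b1 ^+ (p ^ n1) = [~ b2, b1] ^+ (u1 * p ^ (m - o1')),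
      b2 ^+ (p ^ n2) = [~ b2, b1] ^+ (u2 * p ^ (m - o2')))))%g.

Local Open Scope ring_scope.

Definition qpow (p : nat) (a : int) : rat := (p%:Q) ^ a.

Definition a1_of (m n1 n2 o1 o2 o1' o2' : nat) : int :=
  Num.min (o1' : int) (o2%:Z + Num.min (n1%:Z - n2%:Z + o1'%:Z - o2'%:Z) 0).

Definition a2_of (m n1 n2 o1 o2 o1' o2' : nat) : int :=
  if (o1 == 0)%N then 0
  else if (o2 == 0)%N then
    Num.min (o1 : int) (Num.min (o2' : int)
            (o2'%:Z - o1'%:Z + Num.max 0 (o1%:Z + n2%:Z - n1%:Z)))
  else Num.min (o1%:Z - o2%:Z) (o2'%:Z - o1'%:Z).

Definition inv_conditions (p m n1 n2 o1 o2 o1' o2' u1 u2 : nat) : Prop :=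
  let a1 := a1_of m n1 n2 o1 o2 o1' o2' in
  let a2 := a2_of m n1 n2 o1 o2 o1' o2' in
  [/\ (n2 <= n1 /\ 1 <= n2)%N,
   [/\ (o1 < minn m n1)%N, (o2 < minn m n2)%N, (o1' <= m - o1)%N,
       (o2' <= m - o2)%N & ~~ (p %| u1)%N /\ ~~ (p %| u2)%N],
   [\/ (o1 == 0)%N /\ (o1' <= o2' <= o1' + o2 + n1 - n2)%N,
       [/\ (o2 == 0)%N, (0 < o1)%N, (n2 < n1)%N,
           o1'%:Z + Num.min 0 (n1%:Z - n2%:Z - o1%:Z) <= o2'%:Z
         & (o2' <= o1' + n1 - n2)%N]
     | [/\ (0 < o2)%N, (o2 < o1)%N, (o1 < o2 + n1 - n2)%N
         & (o1' <= o2' <= o1' + n1 - n2)%N]],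
   [/\ (o2 + o1' <= m)%N, (m <= n1)%N &
       ((o1 + o2' <= m)%N /\ (m <= n2)%N \/
        [/\ 2 * m%:Z - o1%:Z - o2'%:Z = n2%:Z, (n2 < m)%N
          & (u2 == 1 %[mod p ^ (m - n2)])%N])] &
   ((1 <= u1)%N /\ u1%:Q <= qpow p a1) /\
   ((1 <= u2)%N /\ u2%:Q <= qpow p a2 \/
    [/\ (o1 * o2 != 0)%N, n1%:Z - n2%:Z + o1'%:Z - o2'%:Z = 0, 0 < a1,
        1 + qpow p a2 <= u2%:Q /\ u2%:Q <= 2 * qpow p a2
      & (u1 == 1 %[mod p])%N])].

(* inv(G) = I : I satisfies (I)-(VI) and G is isomorphic to G_I
   (by the classification such an I is unique) *)
Definition inv_is (gT : finGroupType) (G : {set gT})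
  (p m n1 n2 o1 o2 o1' o2' u1 u2 : nat) : Prop :=
  inv_conditions p m n1 n2 o1 o2 o1' o2' u1 u2 /\
  isog_GI G p m n1 n2 o1 o2 o1' o2' u1 u2.

End Invariants.

(* Main.v *)
From HB Require Import structures.
From mathcomp Require Import all_boot all_order all_algebra all_fingroup all_solvable.
From mathcomp Require Import ring.
Require Import Defs.
Import GRing.Theory.
Set Implicit Arguments. Unset Strict Implicit. Unset Printing Implicit Defensive.

Section ZidSec.
Local Open Scope ring_scope.
Lemma zL (Z : zmodType) (a b c : Z) : (a - b) + (b - c) = a - c.
Proof. by rewrite -addrA addKr. Qed.
Lemma zid1 (Z : zmodType) (x b c e : Z) : x - e = (x - b - (c - e)) + (b - e) + (c - e).
Proof. by rewrite addrAC subrK zL. Qed.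
Lemma zid2 (Z : zmodType) (a b c d e : Z) : a - e = (a - b - (c - d)) - (e - c - (b - d)).
Proof.
have h : a - b - (c - d) + (b - d) = a - c by rewrite addrAC zL opprB zL.
by rewrite [- (e - c - _)]opprB addrA h opprB zL.
Qed.

End ZidSec.


Section HeisDef.
Variable p : nat.
Local Open Scope ring_scope.
Definition heis := ('F_p * 'F_p * 'F_p)%type.
Definition hmul (x y : heis) : heis :=
  let: (a,b,c) := x in let: (a',b',c') := y in (a+a', b+b', c+c'+a*b').
Definition hone : heis := (0,0,0).
Definition hinv (x:heis) : heis := let: (a,b,c) := x in (-a,-b,-c+a*b).
Lemma hmulA : associative hmul.
Proof. by move=> [[a b] c] [[a' b'] c'] [[a'' b''] c''] /=; congr (_,_,_); ring. Qed.
Lemma hmul1 : left_id hone hmul.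
Proof. by move=> [[a b] c] /=; congr (_,_,_); ring. Qed.
Lemma hmulV : left_inverse hone hinv hmul.
Proof. by move=> [[a b] c] /=; congr (_,_,_); ring. Qed.
End HeisDef.
HB.instance Definition _ p := Finite.on (heis p).
HB.instance Definition _ p := Finite_isGroup.Build (heis p) (@hmulA p) (@hmul1 p) (@hmulV p).

Section HeisT.
Variable p : nat.
Local Open Scope ring_scope.
Lemma hmulE (x y : heis p) : (x * y)%g = hmul x y. Proof. by []. Qed.
Lemma hinvE (x : heis p) : (x^-1)%g = hinv x. Proof. by []. Qed.
Lemma h1E : (1 : heis p)%g = hone p. Proof. by []. Qed.
Definition hX : heis p := (1,0,0).
Definition hY : heis p := (0,1,0).
Lemma hXn n : (hX ^+ n)%g = (n%:R, 0, 0).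
Proof. elim: n => [|n IH]; first by []. rewrite expgS IH hmulE /=; congr (_,_,_); rewrite ?mulrS; ring. Qed.
Lemma hYn n : (hY ^+ n)%g = (0, n%:R, 0).
Proof. elim: n => [|n IH]; first by []. rewrite expgS IH hmulE /=; congr (_,_,_); rewrite ?mulrS; ring. Qed.
Definition hz (g : 'F_p) : heis p := (0,0,g).
Lemma hZn (g : 'F_p) n : (hz g ^+ n)%g = hz (n%:R * g).
Proof. elim: n => [|n IH]; first by rewrite mul0r. rewrite expgS IH hmulE /=; congr (_,_,_); rewrite ?mulrS; ring. Qed.
Lemma hcomm : ([~ hY, hX])%g = hz (-1).
Proof. rewrite /commg /conjg !hmulE !hinvE /= ; congr (_,_,_); ring. Qed.
Lemma hZcentral (g : 'F_p) (x : heis p) : (hz g ^ x)%g = hz g.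
Proof. case: x => [[a b] c]. rewrite /conjg !hmulE !hinvE /=; congr (_,_,_); ring. Qed.
End HeisT.
Section Pres.
Variable p : nat.
Hypothesis pr : prime p.
Local Open Scope ring_scope.
Lemma Fp_p : (p%:R : 'F_p) = 0.
Proof. by apply/eqP; rewrite -(dvdn_pcharf (pchar_Fp pr)). Qed.
Lemma Fp_pe e : (0 < e)%N -> ((p ^ e)%:R : 'F_p) = 0.
Proof. by move=> he; rewrite natrX Fp_p expr0n; case: e he. Qed.
End Pres.
Section Pres2.
Variable p : nat.
Hypothesis pr : prime p.
Local Open Scope ring_scope.

Lemma hom_heis (m n1 n2 o1 o2 o1' o2' u1 u2 : nat) :
  (o1 < m)%N -> (o2 < m)%N -> (o1' < m)%N -> (o2' < m)%N -> (0 < n2)%N -> (0 < n1)%N ->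
  ((<[hX p]> <*> <[hY p]>)%G \homg Grp (b1 : b2 :
     ([~ b2, b1] ^+ (p ^ m)%N = 1,
      [~ b2, b1] ^ b1 = [~ b2, b1] ^+ (r1 p m o1)%N,
      [~ b2, b1] ^ b2 = [~ b2, b1] ^+ (r2 p m o1 o2)%N,
      b1 ^+ (p ^ n1)%N = [~ b2, b1] ^+ (u1 * p ^ (m - o1'))%N,
      b2 ^+ (p ^ n2)%N = [~ b2, b1] ^+ (u2 * p ^ (m - o2'))%N)))%g.
Proof.
move=> ho1 ho2 ho1' ho2' hn2 hn1.
apply/existsP; exists (hX p, hY p); rewrite /= !xpair_eqE /=.
have hz0 : hz (0 : 'F_p)%R = 1%g by [].
have hm : (0 < m)%N by apply: leq_ltn_trans ho1.
have r1E : ((r1 p m o1)%:R : 'F_p) = 1%R.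
  by rewrite /r1 natrD Fp_pe ?subn_gt0 // addr0.
have r2E : ((r2 p m o1 o2)%:R : 'F_p) = 1%R.
  rewrite /r2; case: ifP => _; first by rewrite natrD Fp_pe ?subn_gt0 // addr0.
  by rewrite natrX r1E expr1n.
rewrite eqxx hcomm !hZn !hZcentral hXn hYn r1E r2E !mul1r /=.
rewrite !natrM !Fp_pe ?subn_gt0 // ?mulr0 ?mul0r.
by rewrite /hz /= !eqxx.
Qed.
End Pres2.
Section NC.
Variable p : nat.
Local Open Scope ring_scope.
Lemma hmul_pair (a b c a' b' c' : 'F_p) :
  (((a, b, c) : heis p) * ((a', b', c') : heis p))%g = (a + a', b + b', c + c' + a * b') :> heis p.
Proof. by []. Qed.
Lemma hXY_ncomm : ~ commute (hX p) (hY p).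
Proof.
rewrite /commute /hX /hY !hmul_pair !mul0r !addr0 mulr1 add0r.
by move=> /(congr1 snd); cbn [snd] => /eqP; rewrite oner_eq0.
Qed.
End NC.


Section Phi.
Variable p : nat.
Local Open Scope ring_scope.
Definition phi (x : heis p) : 'M['F_p]_3 :=
  let: (a, b, c) := x in
  \matrix_(i < 3, j < 3)
    (if (i == j :> nat) then 1 else if ((i : nat) == 0%N) && ((j : nat) == 1%N) then a
     else if ((i : nat) == 1%N) && ((j : nat) == 2%N) then b
     else if ((i : nat) == 0%N) && ((j : nat) == 2%N) then c else 0).

Lemma phiM (x y : heis p) : phi (x * y)%g = phi x *m phi y.
Proof.
case: x => [[a b] c]; case: y => [[a' b'] c']; rewrite hmulE /=.
apply/matrixP => i j; rewrite !mxE !big_ord_recl big_ord0 !mxE /=.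
case: i => [[|[|[|i]]] hi] //; case: j => [[|[|[|j]]] hj] //=; ring.
Qed.

Lemma phi1 : phi 1%g = 1%:M.
Proof.
apply/matrixP => i j; rewrite /= !mxE.
case: i => [[|[|[|i]]] hi] //; case: j => [[|[|[|j]]] hj] //=.
Qed.

Lemma phi_low (x : heis p) (i j : 'I_3) : (j <= i)%N -> phi x i j = (i == j)%:R.
Proof.
case: x => [[a b] c] /=; rewrite !mxE.
case: i => [[|[|[|i]]] hi] //; case: j => [[|[|[|j]]] hj] //=.
Qed.

Lemma phi_inj1 (x : heis p) : phi x = 1%:M -> x = 1%g.
Proof.
case: x => [[a b] c] /= /matrixP H.
have h01 := H ord0 (lift ord0 ord0).
have h12 := H (lift ord0 ord0) (lift ord0 (lift ord0 ord0)).
have h02 := H ord0 (lift ord0 (lift ord0 ord0)).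
rewrite !mxE /= in h01 h12 h02.
by rewrite h01 h12 h02.
Qed.
End Phi.


Section Alg.
Variables (F : fieldType) (gT : finGroupType).
Local Open Scope ring_scope.
Local Notation V := (galg F gT).
Local Notation gel := (gel F).

Lemma gelE (g h : gT) : gel g h = (h == g)%:R.
Proof. by rewrite ffunE. Qed.

Lemma gmulDl (x y z : V) : gmul (x + y) z = gmul x z + gmul y z.
Proof. by apply/ffunP => g; rewrite !ffunE -big_split /=; apply: eq_bigr => h _; rewrite !ffunE mulrDl. Qed.
Lemma gmulDr (x y z : V) : gmul x (y + z) = gmul x y + gmul x z.
Proof. by apply/ffunP => g; rewrite !ffunE -big_split /=; apply: eq_bigr => h _; rewrite !ffunE mulrDr. Qed.
Lemma gmulZl a (x z : V) : gmul (a *: x) z = a *: gmul x z.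
Proof. apply/ffunP => g; rewrite !ffunE scaler_sumr; apply: eq_bigr => h _; by rewrite !ffunE scalerAl. Qed.
Lemma gmulZr a (x z : V) : gmul x (a *: z) = a *: gmul x z.
Proof. apply/ffunP => g; rewrite !ffunE scaler_sumr; apply: eq_bigr => h _; by rewrite !ffunE scalerAr. Qed.
Lemma gmul0l (z : V) : gmul 0 z = 0.
Proof. by apply/ffunP => g; rewrite !ffunE big1 // => h _; rewrite ffunE mul0r. Qed.
Lemma gmul0r (z : V) : gmul z 0 = 0.
Proof. by apply/ffunP => g; rewrite !ffunE big1 // => h _; rewrite ffunE mulr0. Qed.
Lemma gmulNl (x z : V) : gmul (- x) z = - gmul x z.
Proof. by rewrite -scaleN1r gmulZl scaleN1r. Qed.
Lemma gmulNr (x z : V) : gmul z (- x) = - gmul z x.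
Proof. by rewrite -scaleN1r gmulZr scaleN1r. Qed.
Lemma gmulBl (x y z : V) : gmul (x - y) z = gmul x z - gmul y z.
Proof. by rewrite gmulDl gmulNl. Qed.
Lemma gmulBr (x y z : V) : gmul z (x - y) = gmul z x - gmul z y.
Proof. by rewrite gmulDr gmulNr. Qed.
Lemma gmul_suml I r (P : pred I) (f : I -> V) z :
  gmul (\sum_(i <- r | P i) f i) z = \sum_(i <- r | P i) gmul (f i) z.
Proof. exact: (big_morph (fun x => gmul x z) (fun x y => gmulDl x y z) (gmul0l z)). Qed.
Lemma gmul_sumr I r (P : pred I) (f : I -> V) z :
  gmul z (\sum_(i <- r | P i) f i) = \sum_(i <- r | P i) gmul z (f i).
Proof. exact: (big_morph (fun x => gmul z x) (fun x y => gmulDr z x y) (gmul0r z)). Qed.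

Lemma gmul_gel (g h : gT) : gmul (gel g) (gel h) = gel (g * h)%g.
Proof.
apply/ffunP => x; rewrite !ffunE (bigD1 g) //= big1 => [|k /negbTE kg]; last by rewrite gelE kg mul0r.
rewrite !gelE eqxx mul1r addr0.
suff -> : ((g^-1 * x)%g == h) = (x == (g*h)%g) by [].
by apply/idP/idP => [/eqP <- | /eqP ->]; rewrite ?mulKVg ?mulKg.
Qed.

Lemma gmulx1 (x : V) : gmul x (gel 1%g) = x.
Proof.
apply/ffunP => g; rewrite ffunE (bigD1 g) //= big1 => [|k kg].
  by rewrite gelE mulVg eqxx /= mulr1n mulr1 addr0.
rewrite gelE; case: eqP => [e|]; last by rewrite mulr0.
by move: kg; rewrite -(mulKVg k g) e mulg1 eqxx.
Qed.

Lemma galgE (x : V) : x = \sum_g x g *: gel g.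
Proof.
apply/ffunP => h; rewrite sum_ffunE (bigD1 h) //= big1 => [|k kh]; rewrite ffunE gelE.
  by rewrite eqxx /= mulr1n addr0; symmetry; exact: mulr1.
by rewrite eq_sym (negbTE kh) /= mulr0n scaler0.
Qed.

Lemma gprodv_min (U W X : {vspace V}) :
  (forall u v, u \in U -> v \in W -> gmul u v \in X) -> (gprodv U W <= X)%VS.
Proof.
move=> H; apply/span_subvP => z /allpairsP[[u v] /= [hu hv ->]].
by apply: H; apply: vbasis_mem.
Qed.

Lemma mem_gprodv (U W : {vspace V}) u v : u \in U -> v \in W -> gmul u v \in gprodv U W.
Proof.
move=> hu hv; rewrite (coord_vbasis hu) (coord_vbasis hv) gmul_suml.
apply: rpred_sum => i _; rewrite gmulZl gmul_sumr; apply: rpredZ.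
apply: rpred_sum => j _; rewrite gmulZr; apply: rpredZ.
apply: memv_span; apply: allpairs_f; apply: mem_nth; by rewrite size_tuple.
Qed.

Lemma gprodvS (U U' W W' : {vspace V}) : (U <= U')%VS -> (W <= W')%VS ->
  (gprodv U W <= gprodv U' W')%VS.
Proof.
move=> sU sW; apply: gprodv_min => u v hu hv.
by apply: mem_gprodv; [apply: (subvP sU) | apply: (subvP sW)].
Qed.

Lemma mem_aug (H : {set gT}) h : h \in H -> gel h - gel 1%g \in aug F H.
Proof. by move=> hH; apply: memv_span; apply/mapP; exists h; rewrite ?mem_enum. Qed.

End Alg.


Section Rep.
Local Open Scope ring_scope.
Variables (F : fieldType) (gT : finGroupType) (M : gT -> 'M[F]_3).
Hypothesis M1 : M 1%g = 1%:M.
Hypothesis MM : forall g h, M (g * h)%g = M g *m M h.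
Hypothesis Mlow : forall g (i j : 'I_3), (j <= i)%N -> M g i j = (i == j)%:R.
Local Notation V := (galg F gT).

Definition rhoM (x : V) : 'M[F]_3 := \sum_g (x g : F) *: M g.
Lemma rhoM_lin : linear rhoM.
Proof.
move=> a x y; rewrite /rhoM scaler_sumr -big_split; apply: eq_bigr => g _.
by rewrite !ffunE scalerA scalerDl.
Qed.

Definition maskr (d : nat) (x : V) : 'M[F]_3 :=
  \matrix_(i, j) ((j < i + d)%N%:R * rhoM x i j).
Lemma maskr_lin d : linear (maskr d).
Proof.
move=> a x y; apply/matrixP => i j; rewrite !mxE rhoM_lin !mxE; ring.
Qed.
HB.instance Definition _ d := GRing.isLinear.Build F V _ _ (maskr d) (maskr_lin d).

Definition Lev d : {vspace V} := lker (linfun (maskr d)).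

Lemma LevP d x : reflect (forall i j : 'I_3, (j < i + d)%N -> rhoM x i j = 0) (x \in Lev d).
Proof.
rewrite memv_ker lfunE /=; apply: (iffP eqP) => [H i j hij | H].
  by move/matrixP: H => /(_ i j); rewrite !mxE hij mul1r.
apply/matrixP => i j; rewrite !mxE; case: ltnP => h; first by rewrite H // mulr0.
by rewrite mul0r.
Qed.

Lemma rhoM_gel g : rhoM (gel F g) = M g.
Proof.
rewrite /rhoM (bigD1 g) //= big1 => [|k kg]; first by rewrite gelE eqxx scale1r addr0.
by rewrite gelE (negbTE kg) scale0r.
Qed.

Lemma rhoM_mul x y : rhoM (gmul x y) = rhoM x *m rhoM y.
Proof.
rewrite /rhoM mulmx_suml.
under eq_bigr do rewrite ffunE scaler_suml.
rewrite exchange_big /=; apply: eq_bigr => h _.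
rewrite (reindex_inj (mulgI h)) /= -scalemxAl mulmx_sumr scaler_sumr.
apply: eq_bigr => k _.
by rewrite mulKg MM -scalemxAr scalerA.
Qed.

Lemma rhoM_sub x y : rhoM (x - y) = rhoM x - rhoM y.
Proof. by rewrite /rhoM -sumrB; apply: eq_bigr => g _; rewrite !ffunE scalerBl. Qed.

Lemma Lev_mul d e x y : x \in Lev d -> y \in Lev e -> gmul x y \in Lev (d + e).
Proof.
move=> /LevP hx /LevP hy; apply/LevP => i j hij; rewrite rhoM_mul mxE.
apply: big1 => k _; case: (ltnP k (i + d)) => hk; first by rewrite hx // mul0r.
rewrite hy ?mulr0 //; apply: leq_trans hij _; rewrite addnA leq_add2r; exact: hk.
Qed.

Lemma aug_Lev1 : (aug F [set: gT] <= Lev 1)%VS.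
Proof.
apply/span_subvP => z /mapP[h _ ->]; apply/LevP => i j hij.
rewrite addn1 ltnS in hij.
by rewrite rhoM_sub !rhoM_gel M1 !mxE Mlow // subrr.
Qed.

Lemma C_Lev3 : (gprodv (gprodv (aug F [set: gT]) (aug F [set: gT])) (aug F [set: gT]) <= Lev 3)%VS.
Proof.
have h2 : (gprodv (aug F [set: gT]) (aug F [set: gT]) <= Lev 2)%VS.
  apply: gprodv_min => u v hu hv; apply: (@Lev_mul 1 1); exact: (subvP aug_Lev1).
apply: gprodv_min => u v hu hv; apply: (@Lev_mul 2 1); [exact: (subvP h2) | exact: (subvP aug_Lev1)].
Qed.

Lemma Lev3_0 x : x \in Lev 3 -> rhoM x = 0.
Proof.
move/LevP => H; apply/matrixP => i j; rewrite mxE H //; case: i j => [i hi] [j hj] /=.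
by apply: leq_trans hj _; rewrite addnS ltnS leq_addl.
Qed.

End Rep.


Section Main.
Local Open Scope ring_scope.
Variables (F : fieldType) (gT : finGroupType).
Local Notation V := (galg F gT).
Local Notation IG := (aug F [set: gT]).
Local Notation II := (gprodv IG IG).
Local Notation gel := (gel F).

Lemma gmul_gel1 (u w y : gT) :
  gmul (gel u - gel w) (gel y - gel 1%g) = gel (u * y)%g - gel u - (gel (w * y)%g - gel w).
Proof. by rewrite gmulBl !gmulBr !gmul_gel !mulg1. Qed.

Lemma gelB_IG (u w : gT) : gel u - gel w \in IG.
Proof.
have -> : gel u - gel w = (gel u - gel 1%g) - (gel w - gel 1%g) by rewrite opprB zL.
by apply: rpredB; apply: mem_aug; apply: in_setT.
Qed.

Lemma der_II h : h \in ([set: gT]^`(1))%g -> gel h - gel 1%g \in II.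
Proof.
pose S := [set h : gT | gel h - gel 1%g \in II].
have gS : group_set S.
  apply/group_setP; split; first by rewrite inE subrr mem0v.
  move=> x y; rewrite !inE => hx hy.
  rewrite (@zid1 _ (gel (x*y)%g) (gel x) (gel y) (gel 1%g)).
  rewrite rpredD // rpredD //.
  have -> : gel (x * y)%g - gel x - (gel y - gel 1%g) = gmul (gel x - gel 1%g) (gel y - gel 1%g).
    by rewrite gmul_gel1 mul1g.
  by apply: mem_gprodv; apply: gelB_IG.
have sub : ([set: gT]^`(1))%g \subset (group gS).
  rewrite derg1 gen_subG; apply/subsetP => _ /imset2P[x y _ _ ->].
  rewrite /= inE.
  set w := (x^-1 * y^-1)%g.
  have e1 : [~ x, y]%g = (w * x * y)%g by rewrite /w /commg /conjg !mulgA.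
  have e2 : (w * y * x = 1)%g by rewrite /w mulgKV mulVg.
  rewrite (@zid2 _ (gel [~ x, y]%g) (gel (w * x)%g) (gel (w * y)%g) (gel w) (gel 1%g)).
  rewrite -{1}e2 e1 -!gmul_gel1.
  by apply: rpredB; apply: mem_gprodv; apply: gelB_IG.
by move=> hh; have := subsetP sub h hh; rewrite inE.
Qed.

Lemma B_sub_C : (gprodv (aug F ([set: gT]^`(1))%g) IG <= gprodv II IG)%VS.
Proof.
apply: gprodvS => //; apply/span_subvP => z /mapP[h hh ->].
by apply: der_II; rewrite mem_enum in hh.
Qed.

Lemma dim_add_line (U : {vspace V}) v : v \notin U -> \dim (U + <[v]>) = (\dim U).+1.
Proof.
move=> vU; have v0 : v != 0 by apply: contraNneq vU => ->; rewrite mem0v.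
rewrite dimv_disjoint_sum ?dim_vline ?v0 ?addn1 //.
apply/eqP; rewrite -subv0; apply/subvP => x /memv_capP[xU /vlineP[k xk]].
rewrite memv0; have [k0|k0] := eqVneq k 0; first by rewrite xk k0 scale0r.
by move: vU; rewrite -[v](scalerK k0) -xk rpredZ.
Qed.

End Main.


Theorem mainTheorem11 (gT : finGroupType)
    (p m n1 n2 o1 o2 o1' o2' u1 u2 : nat) :
  prime p -> odd p ->
  (p.-group [set: gT])%g ->
  ~~ (abelian [set: gT])%g ->
  (exists x y : gT, <<[set x; y]>>%g = [set: gT]) ->
  cyclic ([set: gT]^`(1))%g ->
  inv_is [set: gT] p m n1 n2 o1 o2 o1' o2' u1 u2 ->
  o1 != o2 ->
  (0 < maxn o1' o2' < m)%N ->
  (2 <= n2)%N ->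
  let kG := (fullv : {vspace galg 'F_p gT}) in
  let IG := aug 'F_p [set: gT] in
  let IG' := aug 'F_p ([set: gT]^`(1))%g in
  let A := gprodv IG' kG in
  let B := gprodv IG' IG in
  let C := gprodv (gprodv IG IG) IG in
  [/\ \dim A = (\dim B).+1,
      \dim (A + C)%VS = (\dim C).+1,
      (forall x, x \in A -> x \in B -> x \in C) &
      (forall x, x \in A -> x \in C -> x \in B)].
Proof.
move=> pr oddp pg nab gen cyc [conds iso] o12 hmax hn2 kG IG IG' A B C.
case: conds => [[hn21 hn1'] [ho1 ho2 _ _ _] _ _ _].
have hm1 : (o1 < m)%N by move: ho1; rewrite leq_min => /andP[].
have hm2 : (o2 < m)%N by move: ho2; rewrite leq_min => /andP[].
move: hmax => /andP[_]; rewrite gtn_max => /andP[hm1' hm2'].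
have hn1 : (0 < n1)%N by apply: leq_trans hn21.
pose H := (<[hX p]> <*> <[hY p]>)%G.
have homH : (H \homg [set: gT])%g.
  by rewrite (iso _ H); exact: (hom_heis pr u1 u2 hm1 hm2 hm1' hm2' hn1' hn1).
case/homgP: homH => f fim.
case/cyclicP: cyc => a Ga.
have aG' : a \in ([set: gT]^`(1))%g by rewrite Ga cycle_id.
pose M := fun g => phi (f g).
have M1 : M 1%g = 1%:M%R by rewrite /M morph1 phi1.
have MM : forall g h, M (g * h)%g = (M g *m M h)%R.
  by move=> g h; rewrite /M morphM ?inE // phiM.
have Mlow : forall g (i j : 'I_3), (j <= i)%N -> M g i j = (i == j)%:R%R.
  by move=> g i j; exact: phi_low.
have fa : f a != 1%g.
  apply/eqP => fa1.
  have : (H^`(1))%g = 1%g.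
    by rewrite -fim -morphim_der ?subxx // Ga morphim_cycle ?inE // fa1 cycle1.
  move/derG1P => abH.
  have hXH : hX p \in H by rewrite -cycle_subG joing_subl.
  have hYH : hY p \in H by rewrite -cycle_subG joing_subr.
  have := centsP abH (hX p) hXH (hY p) hYH.
  by apply: hXY_ncomm.
pose e := (gel 'F_p a - gel 'F_p 1%g)%R.
have eC : e \notin C.
  apply/negP => eC.
  have := Lev3_0 (subvP (C_Lev3 M1 MM Mlow) _ eC).
  rewrite rhoM_sub !rhoM_gel M1 => /eqP; rewrite subr_eq0 => /eqP /phi_inj1 fa1.
  by rewrite fa1 eqxx in fa.
have BC : (B <= C)%VS := B_sub_C _ _.
have eB : e \notin B by apply: contra eC; apply: (subvP BC).
have eBe : e \in (B + <[e]>)%VS by apply: (subvP (addvSr B <[e]>)); apply: memv_line.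
have IG'e : (IG' <= B + <[e]>)%VS.
  apply/span_subvP => z /mapP[h hh ->]; rewrite mem_enum Ga in hh.
  case/cycleP: hh => i ->; elim: i => [|i IH]; first by rewrite expg0 subrr mem0v.
  rewrite expgSr (@zid1 _ (gel 'F_p (a ^+ i * a)%g) (gel 'F_p (a ^+ i)) (gel 'F_p a) (gel 'F_p 1%g)).
  have -> : (gel 'F_p (a ^+ i * a)%g - gel 'F_p (a ^+ i) - (gel 'F_p a - gel 'F_p 1%g))%R
     = gmul (gel 'F_p (a ^+ i) - gel 'F_p 1%g)%R (gel 'F_p a - gel 'F_p 1%g)%R.
    by rewrite gmul_gel1 mul1g.
  rewrite rpredD // rpredD //; apply: (subvP (addvSl B <[e]>)).
  apply: mem_gprodv; last exact: gelB_IG.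
  by apply: mem_aug; rewrite Ga mem_cycle.
have AE : A = (B + <[e]>)%VS.
  apply/eqP; rewrite eqEsubv; apply/andP; split.
    apply: gprodv_min => u v hu hv.
    pose eps : 'F_p := (\sum_g (v g : 'F_p))%R.
    have -> : v = (v - eps *: gel 'F_p 1%g + eps *: gel 'F_p 1%g)%R by rewrite subrK.
    rewrite gmulDr gmulZr gmulx1; apply: rpredD; last by apply: rpredZ; exact: (subvP IG'e).
    apply: (subvP (addvSl _ _)); apply: mem_gprodv => //.
    have -> : (v - eps *: gel 'F_p 1%g = \sum_g v g *: (gel 'F_p g - gel 'F_p 1%g))%R.
      rewrite {1}[v]galgE /eps scaler_suml -sumrB; apply: eq_bigr => g _.
      by rewrite scalerBr.
    by apply: rpred_sum => g _; apply: rpredZ; apply: gelB_IG.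
  rewrite subv_add; apply/andP; split; first exact: gprodvS (subvv _) (subvf _).
  rewrite -memvE; have -> : e = gmul e (gel 'F_p 1%g) by rewrite gmulx1.
  by apply: mem_gprodv; [apply: mem_aug | apply: memvf].
split.
- by rewrite AE dim_add_line.
- have -> : (A + C = C + <[e]>)%VS.
    apply/eqP; rewrite eqEsubv AE !subv_add addvSl addvSr andbT /=.
    by rewrite (subv_trans BC (addvSl _ _)) addvSr (subv_trans (addvSr B <[e]>) (addvSl _ C)).
  by rewrite dim_add_line.
- by move=> x _ xB; apply: (subvP BC).
move=> x; rewrite AE => /memv_addP[b bB [y /vlineP[k ->] ->]] xC.
have [k0|k0] := eqVneq k 0%R; first by rewrite k0 scale0r addr0.
exfalso; move/negP: eC; apply.
have : (k *: e \in C)%R.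
  by rewrite -(addKr b (k *: e)%R) rpredD // rpredN (subvP BC).
by rewrite -{2}(scalerK k0 e); apply: rpredZ.
Qed.
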